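(* Let $U\in\mathbb{R}^{n\times d}$, let $\mathbf{x}_*\in\mathbb{R}^d$ be $s$-sparse, $\mathbf{e}\in\mathbb{R}^n$ and $\mathbf{y}=U\mathbf{x}_*+\mathbf{e}$. Let $\mathbf{x}_t$ be an iterate of Algorithm 1 and $\mathbf{x}_{t+1}$ the next iterate; let $\mathcal{S}_t,\mathcal{S}_{t+1},\mathcal{S}_*$ be the supports of $\mathbf{x}_t,\mathbf{x}_{t+1},\mathbf{x}_*$. If $|\mathcal{S}_t\setminus\mathcal{S}_*|\le s$ and $\lambda_t\ge\|U^\top\mathbf{e}\|_\infty+\frac{\delta_s+\sqrt2\theta_{s,s}}{\sqrt s}\|\mathbf{x}_t-\mathbf{x}_*\|_2$, then $|\mathcal{S}_{t+1}\setminus\mathcal{S}_*|\le s$ and $|\mathcal{S}_*\cup\mathcal{S}_t\cup\mathcal{S}_{t+1}|\le3s$.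
   Context: $U_{\mathcal T}$ is the column submatrix of $U$ indexed by $\mathcal T$. $\delta_s$ is the smallest constant $\ge0$ with $(1-\delta_s)\|\mathbf{v}\|_2^2\le\|U_{\mathcal T}\mathbf{v}\|_2^2\le(1+\delta_s)\|\mathbf{v}\|_2^2$ for all $|\mathcal T|\le s$, $\mathbf{v}\in\mathbb{R}^{|\mathcal T|}$; $\theta_{s,s}$ (with $2s\le d$) is the smallest constant with $|\langle U_{\mathcal T}\mathbf{v},U_{\mathcal T'}\mathbf{v}'\rangle|\le\theta_{s,s}\|\mathbf{v}\|_2\|\mathbf{v}'\|_2$ for all disjoint $\mathcal T,\mathcal T'$ of size at most $s$. Algorithm 1: $\mathbf{x}_1=0$ and $\mathbf{x}_{t+1}=\mathrm{sign}(\widehat{\mathbf{x}}_t)[|\widehat{\mathbf{x}}_t|-\lambda_t]_+$ with $\widehat{\mathbf{x}}_t=\mathbf{x}_t-U^\top(U\mathbf{x}_t-\mathbf{y})$ (componentwise), for parameters $\lambda_t>0$. *)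

(* Defs.v *)
(* R : rcfType (real closed field; the reals are an instance). *)
From HB Require Import structures.
From mathcomp Require Import all_boot all_order all_algebra.
Set Implicit Arguments. Unset Strict Implicit. Unset Printing Implicit Defensive.
Import Order.TTheory GRing.Theory Num.Theory.
Local Open Scope ring_scope.

Section Defs.
Variable R : rcfType.

Definition sqnorm2 {k : nat} (v : 'cV[R]_k) : R := \sum_i (v i 0) ^+ 2.
Definition norm2 {k : nat} (v : 'cV[R]_k) : R := Num.sqrt (sqnorm2 v).
Definition dotv {k : nat} (a b : 'cV[R]_k) : R := \sum_i a i 0 * b i 0.
Definition norminf {k : nat} (v : 'cV[R]_k) : R := \big[Num.max/0]_i `|v i 0|.

Definition supp {k : nat} (v : 'cV[R]_k) : {set 'I_k} := [set i | v i 0 != 0].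

(* U_T : column submatrix of U indexed by T (columns in increasing order) *)
Definition colsubT {n d : nat} (U : 'M[R]_(n, d)) (T : {set 'I_d}) : 'M[R]_(n, #|T|) :=
  colsub (fun j : 'I_#|T| => enum_val j) U.

Definition rip_ineq {n d : nat} (U : 'M[R]_(n, d)) (s : nat) (c : R) : Prop :=
  forall T : {set 'I_d}, (#|T| <= s)%N -> forall v : 'cV[R]_#|T|,
    (1 - c) * sqnorm2 v <= sqnorm2 (colsubT U T *m v) <= (1 + c) * sqnorm2 v.

Definition is_delta {n d : nat} (U : 'M[R]_(n, d)) (s : nat) (delta : R) : Prop :=
  [/\ 0 <= delta, rip_ineq U s delta &
      forall c, 0 <= c -> rip_ineq U s c -> delta <= c].

Definition roc_ineq {n d : nat} (U : 'M[R]_(n, d)) (s : nat) (c : R) : Prop :=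
  forall T T' : {set 'I_d}, (#|T| <= s)%N -> (#|T'| <= s)%N -> [disjoint T & T'] ->
    forall (v : 'cV[R]_#|T|) (v' : 'cV[R]_#|T'|),
      `|dotv (colsubT U T *m v) (colsubT U T' *m v')| <= c * norm2 v * norm2 v'.

Definition is_theta {n d : nat} (U : 'M[R]_(n, d)) (s : nat) (theta : R) : Prop :=
  roc_ineq U s theta /\ forall c, roc_ineq U s c -> theta <= c.

(* one step of Algorithm 1 (componentwise soft thresholding) *)
Definition ista_step {n d : nat} (U : 'M[R]_(n, d)) (y : 'cV[R]_n) (lam : R)
    (x : 'cV[R]_d) : 'cV[R]_d :=
  let xh := x - U^T *m (U *m x - y) in
  \col_i (Num.sg (xh i 0) * Num.max (`|xh i 0| - lam) 0).

(* iterates of Algorithm 1: x_1 = 0, x_{t+1} = ista_step lam_t x_t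
   (index t : nat with t >= 1; ista_iter _ _ _ 0 is an unused dummy equal to 0) *)
Fixpoint ista_iter {n d : nat} (U : 'M[R]_(n, d)) (y : 'cV[R]_n) (lam : nat -> R)
    (t : nat) : 'cV[R]_d :=
  match t with
  | 0 => 0
  | 1 => 0
  | t'.+1 => ista_step U y (lam t') (ista_iter U y lam t')
  end.

End Defs.

(* Main.v *)
Require Import Defs.
From HB Require Import structures.
From mathcomp Require Import all_boot all_order all_algebra.
From mathcomp Require Import ring lra zify.
Import Order.TTheory GRing.Theory Num.Theory.
Set Implicit Arguments. Unset Strict Implicit. Unset Printing Implicit Defensive.
Local Open Scope ring_scope.

Definition onT (R : rcfType) (d : nat) (T : {set 'I_d}) (v : 'cV[R]_d) :=
  forall i, i \notin T -> v i 0 = 0.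
Definition PT (R : rcfType) d (T : {set 'I_d}) (v : 'cV[R]_d) : 'cV[R]_d :=
  \col_i (if i \in T then v i 0 else 0).
Definition rT (R : rcfType) d (T : {set 'I_d}) (v : 'cV[R]_d) : 'cV[R]_#|T| :=
  \col_j v (enum_val j) 0.

Lemma sq_dot (R : rcfType) k (v : 'cV[R]_k) : sqnorm2 v = dotv v v.
Proof. by apply: eq_bigr => i _; rewrite expr2. Qed.

Lemma dot_sym (R : rcfType) k (a b : 'cV[R]_k) : dotv a b = dotv b a.
Proof. by apply: eq_bigr => i _; rewrite mulrC. Qed.

Lemma dotDr (R : rcfType) k (a b c : 'cV[R]_k) : dotv a (b + c) = dotv a b + dotv a c.
Proof. rewrite /dotv -big_split /=; apply: eq_bigr => i _; rewrite !mxE; ring. Qed.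

Lemma dotBr (R : rcfType) k (a b c : 'cV[R]_k) : dotv a (b - c) = dotv a b - dotv a c.
Proof. rewrite /dotv -sumrB; apply: eq_bigr => i _; rewrite !mxE; ring. Qed.

Lemma dot_tr (R : rcfType) n k (M : 'M[R]_(n, k)) a b :
  dotv a (M^T *m b) = dotv (M *m a) b.
Proof.
rewrite /dotv.
under eq_bigr => i _ do rewrite !mxE big_distrr /=.
under [RHS]eq_bigr => i _ do rewrite !mxE big_distrl /=.
rewrite exchange_big /=; apply: eq_bigr => i _; apply: eq_bigr => j _.
rewrite !mxE; ring.
Qed.

Lemma dot_quad (R : rcfType) k (x y : R) (p q : 'cV[R]_k) :
  dotv (x *: p + y *: q) (x *: p + y *: q) =
  x ^+ 2 * dotv p p + 2 * x * y * dotv p q + y ^+ 2 * dotv q q.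
Proof.
rewrite /dotv !mulr_sumr -!big_split /=; apply: eq_bigr => i _; rewrite !mxE; ring.
Qed.

Lemma dot0l (R : rcfType) k (b : 'cV[R]_k) : dotv 0 b = 0.
Proof. by apply: big1 => i _; rewrite mxE mul0r. Qed.

Lemma sq_ge0 (R : rcfType) k (v : 'cV[R]_k) : 0 <= sqnorm2 v.
Proof. by apply: sumr_ge0 => i _; rewrite sqr_ge0. Qed.

Lemma norm2_sq (R : rcfType) k (v : 'cV[R]_k) : norm2 v ^+ 2 = sqnorm2 v.
Proof. by rewrite /norm2 sqr_sqrtr // sq_ge0. Qed.

Lemma norm2_ge0 (R : rcfType) k (v : 'cV[R]_k) : 0 <= norm2 v.
Proof. exact: sqrtr_ge0. Qed.

Lemma norm2_eq0 (R : rcfType) k (v : 'cV[R]_k) : norm2 v = 0 -> v = 0.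
Proof.
move=> h; have h2 : sqnorm2 v = 0 by rewrite -norm2_sq h expr2 mulr0.
apply/matrixP => i j; rewrite (ord1 j) mxE.
have := psumr_eq0P (P := predT) (F := fun i => v i 0 ^+ 2) (fun i _ => sqr_ge0 _) h2.
by move=> /(_ i isT) /eqP; rewrite sqrf_eq0 => /eqP.
Qed.

Lemma rT_mul (R : rcfType) n d (U : 'M[R]_(n, d)) (T : {set 'I_d}) v :
  onT T v -> colsubT U T *m rT T v = U *m v.
Proof.
move=> hv; apply/matrixP => k j; rewrite (ord1 j) !mxE.
under eq_bigr => i _ do rewrite !mxE.
rewrite -(big_enum_val (fun i => U k i * v i 0)) /=.
rewrite [RHS](bigID (mem T)) /= [X in _ = _ + X]big1 ?addr0 //.
by move=> i /hv ->; rewrite mulr0.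
Qed.

Lemma rT_sq (R : rcfType) d (T : {set 'I_d}) (v : 'cV[R]_d) :
  onT T v -> sqnorm2 (rT T v) = sqnorm2 v.
Proof.
move=> hv; rewrite /sqnorm2.
under eq_bigr => i _ do rewrite !mxE.
rewrite -(big_enum_val (fun i => v i 0 ^+ 2)) /=.
rewrite [RHS](bigID (mem T)) /= [X in _ = _ + X]big1 ?addr0 //.
by move=> i /hv ->; rewrite expr2 mulr0.
Qed.

Lemma rip_T (R : rcfType) n d (U : 'M[R]_(n, d)) s delta (T : {set 'I_d}) v :
  is_delta U s delta -> (#|T| <= s)%N -> onT T v ->
  (1 - delta) * sqnorm2 v <= sqnorm2 (U *m v) <= (1 + delta) * sqnorm2 v.
Proof.
move=> [_ hr _] hT hv; have := hr T hT (rT T v).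
by rewrite rT_mul // rT_sq.
Qed.

Lemma roc_T (R : rcfType) n d (U : 'M[R]_(n, d)) s theta (T T' : {set 'I_d}) v v' :
  is_theta U s theta -> (#|T| <= s)%N -> (#|T'| <= s)%N -> [disjoint T & T'] ->
  onT T v -> onT T' v' ->
  `|dotv (U *m v) (U *m v')| <= theta * norm2 v * norm2 v'.
Proof.
move=> [hr _] hT hT' hdis hv hv'; have := hr T T' hT hT' hdis (rT T v) (rT T' v').
by rewrite !rT_mul // /norm2 !rT_sq.
Qed.

Lemma onT_lin (R : rcfType) d (T : {set 'I_d}) (x y : R) (a b : 'cV[R]_d) :
  onT T a -> onT T b -> onT T (x *: a + y *: b).
Proof. by move=> ha hb i hi; rewrite !mxE ha // hb // !mulr0 addr0. Qed.

Lemma polar (R : rcfType) n d (U : 'M[R]_(n, d)) s delta (T : {set 'I_d}) a b :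
  is_delta U s delta -> (#|T| <= s)%N -> onT T a -> onT T b ->
  `|dotv (U *m a) (U *m b) - dotv a b| <= delta * norm2 a * norm2 b.
Proof.
move=> hd hT ha hb.
have d0 : 0 <= delta by case: hd.
have [al0|alp] := eqVneq (norm2 a) 0.
  by rewrite al0 mulr0 mul0r (norm2_eq0 al0) mulmx0 !dot0l subr0 normr0.
have [be0|bep] := eqVneq (norm2 b) 0.
  by rewrite be0 mulr0 (norm2_eq0 be0) mulmx0 dot_sym dot0l [dotv a 0]dot_sym dot0l subr0 normr0.
have alg : 0 < norm2 a by rewrite lt_def alp norm2_ge0.
have beg : 0 < norm2 b by rewrite lt_def bep norm2_ge0.
set al := norm2 a in alg alp *; set be := norm2 b in beg bep *.
have hq : forall x y : R, (1 - delta) * (x ^+ 2 * dotv a a + 2 * x * y * dotv a b + y ^+ 2 * dotv b b)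
   <= x ^+ 2 * dotv (U *m a) (U *m a) + 2 * x * y * dotv (U *m a) (U *m b) + y ^+ 2 * dotv (U *m b) (U *m b)
   <= (1 + delta) * (x ^+ 2 * dotv a a + 2 * x * y * dotv a b + y ^+ 2 * dotv b b).
  move=> x y; have := rip_T hd hT (onT_lin x y ha hb).
  by rewrite !sq_dot mulmxDr -!scalemxAr !dot_quad.
have haa : dotv a a = al ^+ 2 by rewrite -sq_dot norm2_sq.
have hbb : dotv b b = be ^+ 2 by rewrite -sq_dot norm2_sq.
move: (hq be al) (hq be (- al)); rewrite haa hbb.
set E := dotv (U *m a) (U *m b); set D := dotv a b.
set A' := dotv (U *m a) (U *m a); set B' := dotv (U *m b) (U *m b).
move=> /andP [h1 h2] /andP [h3 h4].
have ab : 0 < al * be by rewrite mulr_gt0.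
have k1 : (al * be) * (E - D) <= (al * be) * (delta * al * be) by nra.
have k2 : (al * be) * (D - E) <= (al * be) * (delta * al * be) by nra.
rewrite ler_norml; rewrite !ler_pM2l // in k1 k2; apply/andP; split; lra.
Qed.

Lemma norm2_e (R : rcfType) d (i0 : 'I_d) :
  norm2 (\col_k (if k == i0 then 1 else 0) : 'cV[R]_d) = 1.
Proof.
rewrite /norm2 /sqnorm2 (bigD1 i0) //= big1 => [|k /negbTE hk]; last first.
  by rewrite !mxE hk expr2 mulr0.
by rewrite !mxE eqxx expr1n addr0 sqrtr1.
Qed.

Lemma theta_ge0 (R : rcfType) n d (U : 'M[R]_(n, d)) s theta :
  (0 < s)%N -> (2 * s <= d)%N -> is_theta U s theta -> 0 <= theta.
Proof.
move=> s0 sd ht.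
have d1 : (1 < d)%N by lia.
pose i0 : 'I_d := Ordinal (ltn_trans (ltnSn 0) d1). pose i1 : 'I_d := Ordinal d1.
have hne : i0 != i1 by [].
have := roc_T (v := \col_k (if k == i0 then 1 else 0) : 'cV[R]_d)
   (v' := \col_k (if k == i1 then 1 else 0) : 'cV[R]_d) ht
   (T := [set i0]) (T' := [set i1]).
rewrite !cards1 !norm2_e !mulr1 => h; apply: le_trans (h _ _ _ _ _) => //.
- by rewrite disjoints1 in_set1.
- by move=> k; rewrite in_set1 mxE => /negbTE ->.
- by move=> k; rewrite in_set1 mxE => /negbTE ->.
Qed.

Lemma disj_of (d : nat) (A B : {set 'I_d}) :
  (forall i, i \in A -> i \notin B) -> [disjoint A & B].
Proof. by move=> h; rewrite disjoint_subset; apply/subsetP => i /h hi; rewrite inE. Qed.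

Lemma onT_PT (R : rcfType) d (T : {set 'I_d}) (v : 'cV[R]_d) : onT T (PT T v).
Proof. by move=> i hi; rewrite /PT mxE (negbTE hi). Qed.

Lemma z2 (R : rcfType) : (0 : R) ^+ 2 = 0.
Proof. by rewrite expr2 mul0r. Qed.

Theorem corollary2 (R : rcfType) (n d s : nat) (U : 'M[R]_(n, d))
    (xstar : 'cV[R]_d) (e y : 'cV[R]_n) (lam : nat -> R) (delta theta : R) (t : nat) :
  (0 < s)%N -> (2 * s <= d)%N ->
  is_delta U s delta -> is_theta U s theta ->
  (#|supp xstar| <= s)%N ->
  y = U *m xstar + e ->
  (forall k, 0 < lam k) ->
  (1 <= t)%N ->
  (#|supp (ista_iter U y lam t) :\: supp xstar| <= s)%N ->
  lam t >= norminf (U^T *m e)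
           + (delta + Num.sqrt 2 * theta) / Num.sqrt (s%:R)
             * norm2 (ista_iter U y lam t - xstar) ->
  (#|supp (ista_iter U y lam t.+1) :\: supp xstar| <= s)%N /\
  (#|supp xstar :|: supp (ista_iter U y lam t) :|: supp (ista_iter U y lam t.+1)|
     <= 3 * s)%N.
Proof.
move=> s0 sd hd ht hS hy hlam t1 hSt hlt.
have d0 : 0 <= delta by case: hd.
have th0 := theta_ge0 s0 sd ht.
have hx1 : ista_iter U y lam t.+1 = ista_step U y (lam t) (ista_iter U y lam t).
  by clear -t1; case: t t1 => [|t'] //=.
rewrite hx1 in hSt *; clear hx1.
move: (ista_iter U y lam t) hSt hlt => x hSt hlt.
set x1 := ista_step U y (lam t) x.
set S := supp xstar.
have hS0 : forall i, i \notin S -> xstar i 0 = 0 by move=> i; rewrite inE negbK => /eqP.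
have hsupp : forall (v : 'cV[R]_d) i, (i \in supp v) = (v i 0 != 0) by move=> v i; rewrite inE.
move Hh : (x - xstar) => h; move: hlt; rewrite Hh => hlt.
have hdef : forall i, h i 0 = x i 0 - xstar i 0.
  by move=> i; rewrite -Hh !mxE.
move Hg : (U^T *m (U *m h) - h) => g.
set E := U^T *m e.
set c := delta + Num.sqrt 2 * theta.
set N := norm2 h.
have {}hlt : norminf E + c / Num.sqrt s%:R * N <= lam t := hlt.
have sq2 : 0 <= Num.sqrt (2 : R) := sqrtr_ge0 _.
have c0 : 0 <= c by rewrite /c; apply: addr_ge0 => //; apply: mulr_ge0.
have N0 : 0 <= N := norm2_ge0 _.
have ss0 : 0 < Num.sqrt (s%:R : R) by rewrite sqrtr_gt0 ltr0n.
have q0 : 0 <= c / Num.sqrt s%:R * N.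
  by apply: mulr_ge0 => //; apply: divr_ge0 => //; apply: ltW.
have claimA : forall i, i \in supp x1 :\: S -> c / Num.sqrt s%:R * N < `|g i 0|.
  move=> i; rewrite inE hsupp => /andP [hiS hx1i].
  have eq1 : x - U^T *m (U *m x - y) = - g + E + xstar.
    rewrite hy -Hg -Hh /E opprD addrA !mulmxBr.
    move: (U^T *m (U *m x)) (U^T *m (U *m xstar)) (U^T *m e) => A1 A2 A3.
    by apply/matrixP => k j; rewrite !mxE; ring.
  have hxh : (x - U^T *m (U *m x - y)) i 0 = - g i 0 + E i 0.
    by rewrite eq1 !mxE hS0 // addr0.
  have hl : lam t < `|- g i 0 + E i 0|.
    rewrite ltNge; apply/negP => hle; move: hx1i; rewrite /x1 /ista_step mxE hxh.
    by rewrite max_r ?mulr0 ?eqxx // subr_le0.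
  have hE : `|E i 0| <= norminf E by rewrite /norminf; apply: (le_bigmax _ (fun i => `|E i 0|)).
  have := ler_normD (- g i 0) (E i 0); rewrite normrN => hn.
  lra.
have claimB : ~ (s < #|supp x1 :\: S|)%N.
  move=> /ltnW /card_geqP [sq [usq ssq subq]].
  set T := [set i in sq].
  have hTs : #|T| = s by rewrite cardsE; move/card_uniqP: usq => ->.
  have hTA : forall i, i \in T -> i \in supp x1 :\: S by move=> i; rewrite inE => /subq.
  have hTS : forall i, i \in T -> i \notin S by move=> i /hTA; rewrite in_setD => /andP [].
  set Rr := supp x :\: (S :|: T).
  have hTR : forall i, i \in T -> i \notin Rr by move=> i iT; rewrite in_setD in_setU iT orbT.
  have hdec : forall i, [\/ [/\ i \in T, i \notin S & i \notin Rr],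
      [/\ i \notin T, i \in S & i \notin Rr], [/\ i \notin T, i \notin S & i \in Rr] |
      [/\ i \notin T, i \notin S, i \notin Rr & h i 0 = 0]].
    move=> i; case: (boolP (i \in T)) => iT.
      by apply: Or41; split => //; [exact: hTS | exact: hTR].
    case: (boolP (i \in S)) => iS.
      by apply: Or42; split => //; rewrite in_setD in_setU iS.
    case: (boolP (i \in Rr)) => iR; first by apply: Or43.
    apply: Or44; split => //.
    rewrite hdef hS0 // subr0; move: iR; rewrite in_setD in_setU (negbTE iS) (negbTE iT) /=.
    by rewrite hsupp negbK => /eqP.
  pose w := PT T g. pose hT := PT T h. pose hSS := PT S h. pose hR := PT Rr h.
  have hsum : h = hT + hSS + hR.
    apply/matrixP => i j; rewrite (ord1 j) /hT /hSS /hR /PT !mxE.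
    by case: (hdec i) => [[-> /negbTE-> /negbTE->]|[/negbTE-> -> /negbTE->]|
      [/negbTE-> /negbTE-> ->]|[/negbTE-> /negbTE-> /negbTE-> ->]]; rewrite ?addr0 ?add0r.
  have hsq : sqnorm2 hT + sqnorm2 hSS + sqnorm2 hR = N ^+ 2.
    rewrite /N norm2_sq /sqnorm2 -!big_split /=; apply: eq_bigr => i _.
    rewrite /hT /hSS /hR /PT !mxE.
    by case: (hdec i) => [[-> /negbTE-> /negbTE->]|[/negbTE-> -> /negbTE->]|
      [/negbTE-> /negbTE-> ->]|[/negbTE-> /negbTE-> /negbTE-> ->]]; rewrite ?z2 ?addr0 ?add0r.
  have hw2 : sqnorm2 w = \sum_(i in T) g i 0 ^+ 2.
    rewrite /sqnorm2 [RHS]big_mkcond; apply: eq_bigr => i _; rewrite /w /PT mxE.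
    by case: ifP => // _; rewrite z2.
  have hwg : dotv w g = sqnorm2 w.
    rewrite /dotv /sqnorm2; apply: eq_bigr => i _; rewrite /w /PT mxE.
    by case: ifP => _; rewrite expr2 ?mul0r.
  have hwS : dotv w hSS = 0.
    apply: big1 => i _; rewrite /w /hSS /PT !mxE.
    case: (boolP (i \in T)) => iT; first by rewrite (negbTE (hTS i iT)) mulr0.
    by rewrite mul0r.
  have hwR : dotv w hR = 0.
    apply: big1 => i _; rewrite /w /hR /PT !mxE.
    case: (boolP (i \in T)) => iT; first by rewrite (negbTE (hTR i iT)) mulr0.
    by rewrite mul0r.
  have hdecomp : dotv w g = (dotv (U *m w) (U *m hT) - dotv w hT)
      + dotv (U *m w) (U *m hSS) + dotv (U *m w) (U *m hR).
    rewrite -Hg dotBr dot_tr hsum !mulmxDr !dotDr hwS hwR; ring.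
  have cT : (#|T| <= s)%N by rewrite hTs.
  have cR : (#|Rr| <= s)%N.
    by apply: leq_trans hSt; apply: subset_leq_card; apply: setDS; apply: subsetUl.
  have b1 := polar hd cT (@onT_PT _ _ T g) (@onT_PT _ _ T h).
  have b2 := roc_T ht cT hS (disj_of hTS) (@onT_PT _ _ T g) (@onT_PT _ _ S h).
  have b3 := roc_T ht cT cR (disj_of hTR) (@onT_PT _ _ T g) (@onT_PT _ _ Rr h).
  rewrite -/w -/hT -/hSS -/hR in b1 b2 b3.
  have hlow : (c * N) ^+ 2 < sqnorm2 w.
    rewrite hw2.
    have hT0 : (0 < #|T|)%N by rewrite hTs.
    have : \sum_(i in T) (c / Num.sqrt s%:R * N) ^+ 2 < \sum_(i in T) g i 0 ^+ 2.
      apply: ltr_sum.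
        move/card_gt0P: hT0 => [i0 hi0]; apply/hasP; exists i0 => //; exact: mem_index_enum.
      move=> i hi; have := claimA i (hTA i hi).
      rewrite -(real_normK (num_real (g i 0))) => hgi.
      have := normr_ge0 (g i 0); nra.
    rewrite sumr_const hTs => hlt2; apply: le_lt_trans hlt2.
    rewrite -[X in _ <= X]mulr_natr.
    have -> : (c / Num.sqrt s%:R * N) ^+ 2 * s%:R = (c * N) ^+ 2.
      rewrite !exprMn exprVn sqr_sqrtr ?ler0n //; field.
      by rewrite pnatr_eq0 -lt0n s0.
    by [].
  have hup := hdecomp; rewrite hwg in hup.
  rewrite -!norm2_sq in hsq hup hlow.
  move: b1 b2 b3 hlow.
  have := norm2_ge0 w; have := norm2_ge0 hT; have := norm2_ge0 hSS; have := norm2_ge0 hR.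
  set W := norm2 w; set a := norm2 hT; set b := norm2 hSS; set cc := norm2 hR.
  move=> cc0 b0 a0 W0 b1 b2 b3 hlow.
  have u1 := ler_norm (dotv (U *m w) (U *m hT) - dotv w hT).
  have u2 := ler_norm (dotv (U *m w) (U *m hSS)).
  have u3 := ler_norm (dotv (U *m w) (U *m hR)).
  have hW2 : W ^+ 2 <= W * (delta * a + theta * b + theta * cc).
    have -> : W ^+ 2 = _ := hup. lra.
  have cN0 : 0 <= (c * N) ^+ 2 := sqr_ge0 _.
  have Wp : 0 < W by nra.
  have hW : W <= delta * a + theta * b + theta * cc by nra.
  have hsq' : a ^+ 2 + b ^+ 2 + cc ^+ 2 = N ^+ 2 := hsq.
  have aN : a <= N by nra.
  have s2 : Num.sqrt (2 : R) ^+ 2 = 2 by rewrite sqr_sqrtr // ler0n.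
  have bN2 : (b + cc) ^+ 2 <= (Num.sqrt 2 * N) ^+ 2 by rewrite exprMn s2; have := sqr_ge0 (b - cc); have := sqr_ge0 a; nra.
  have bN : b + cc <= Num.sqrt 2 * N.
    have : 0 <= Num.sqrt 2 * N by apply: mulr_ge0.
    nra.
  have k1 := ler_wpM2l d0 aN; have k2 := ler_wpM2l th0 bN.
  have hWc : W <= c * N by rewrite /c; lra.
  have : W ^+ 2 <= (c * N) ^+ 2 by rewrite !expr2; apply: ler_pM.
  by move=> /(lt_le_trans hlow); rewrite ltxx.
have hB : (#|supp x1 :\: S| <= s)%N by rewrite leqNgt; apply/negP.
split; first exact: hB.
have -> : S :|: supp x :|: supp x1 = S :|: (supp x :\: S) :|: (supp x1 :\: S).
  by apply/setP => i; rewrite !in_setU !in_setD; case: (i \in S).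
apply: leq_trans (leq_card_setU _ _).1 _.
apply: leq_trans (leq_add (leq_card_setU _ _).1 (leqnn _)) _.
move: hS hSt hB; rewrite /S; lia.
Qed.
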